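(* Let $s\ge0$, and let $Y\in\{-1,+1\}$ and $\lambda_{C_1},\dots,\lambda_{C_s}\in\{-1,0,+1\}$ be jointly distributed random variables. Define $2\cdot3^s\times2\cdot3^s$ matrices recursively by $$A_0=\begin{bmatrix}1&1\\1&0\end{bmatrix},\quad B_0=\begin{bmatrix}0&0\\0&1\end{bmatrix},\quad D=\begin{bmatrix}1&1&1\\1&0&0\\0&1&0\end{bmatrix},\quad E=\begin{bmatrix}0&0&0\\0&0&1\\0&0&0\end{bmatrix},$$ $$A_s=D\otimes A_{s-1}+E\otimes B_{s-1},\qquad B_s=E\otimes A_{s-1}+D\otimes B_{s-1},$$ where $\otimes$ is the Kronecker product. Index vectors of length $2\cdot3^s$ by $k=t+2\sum_{i=1}^s d_i3^{i-1}$ with $t\in\{0,1\}$ and $d_i\in\{0,1,2\}$. Let $\mu_C$ be the vector whose entry $k$ is $P(Y=y,\lambda_{C_1}=b_1,\dots,\lambda_{C_s}=b_s)$ with $y=1$ if $t=0$, $y=-1$ if $t=1$, and $b_i=1,0,-1$ according as $d_i=0,1,2$. Let $r_C$ be the vector whose entry $k$ is $P\big(\prod_{z\in Z}z=1,\ z=0\ \forall z\in U\big)$, where $Z=\{Y: t=1\}\cup\{\lambda_{C_i}:d_i=1\}$ and $U=\{\lambda_{C_i}:d_i=2\}$ (an empty product equals $1$, so the entry with $Z=U=\emptyset$ equals $1$). Then $A_s\mu_C=r_C$.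
   Context: In the intended application $\lambda_{C_1},\dots,\lambda_{C_s}$ are the outputs of a clique of weak supervision sources (value $0$ meaning abstain) and $Y$ is the task they label; $\mu_C$ is the marginal distribution (label model parameter) of the clique. *)

(* Defs.v *)
From mathcomp Require Import all_boot all_order all_algebra.
From mathcomp Require Import mxtens.
From mathcomp Require Import reals.
Set Implicit Arguments. Unset Strict Implicit. Unset Printing Implicit Defensive.
Import GRing.Theory Num.Theory.
Local Open Scope ring_scope.

Definition mx_of_rows (R : pzRingType) n (rows : seq (seq nat)) : 'M[R]_n :=
  \matrix_(i, j) (nth 0%N (nth [::] rows i) j)%:R.

Definition A0 (R : pzRingType) : 'M[R]_2 := @mx_of_rows R 2 [:: [:: 1; 1]; [:: 1; 0]]%N.
Definition B0 (R : pzRingType) : 'M[R]_2 := @mx_of_rows R 2 [:: [:: 0; 0]; [:: 0; 1]]%N.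
Definition Dm (R : pzRingType) : 'M[R]_3 :=
  @mx_of_rows R 3 [:: [:: 1; 1; 1]; [:: 1; 0; 0]; [:: 0; 1; 0]]%N.
Definition Em (R : pzRingType) : 'M[R]_3 :=
  @mx_of_rows R 3 [:: [:: 0; 0; 0]; [:: 0; 0; 1]; [:: 0; 0; 0]]%N.

Lemma dimS s : (3 * (2 * 3 ^ s) = 2 * 3 ^ s.+1)%N.
Proof. by rewrite expnS mulnCA. Qed.

(* (A_s, B_s), both of size 2*3^s; the Kronecker product [tensmx] (A *t B)
   has entry ((i1*p+i2),(j1*q+j2)) equal to A i1 j1 * B i2 j2. *)
Fixpoint ABmx (R : pzRingType) (s : nat) : 'M[R]_(2 * 3 ^ s) * 'M[R]_(2 * 3 ^ s) :=
  match s return 'M[R]_(2 * 3 ^ s) * 'M[R]_(2 * 3 ^ s) with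
  | 0 => (A0 R, B0 R)
  | s'.+1 =>
      let: (A, B) := ABmx R s' in
      (castmx (dimS s', dimS s') (Dm R *t A + Em R *t B),
       castmx (dimS s', dimS s') (Em R *t A + Dm R *t B))
  end.

Definition Amx (R : pzRingType) s := (ABmx R s).1.
Definition Bmx (R : pzRingType) s := (ABmx R s).2.

(* Digits of an index k = t + 2 * sum_{i=1}^s d_i 3^(i-1);
   the 0-based index i : 'I_s stands for the paper's i+1. *)
Definition tdig (k : nat) : nat := (k %% 2)%N.
Definition ddig (k : nat) (i : nat) : nat := ((k %/ (2 * 3 ^ i)) %% 3)%N.

Definition yval (t : nat) : int := if t == 0%N then 1 else -1.
Definition bval (d : nat) : int := if d == 0%N then 1 else if d == 1%N then 0 else -1.

Definition prob (R : realType) (Omega : finType) (w : Omega -> R)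
  (E : pred Omega) : R := \sum_(om | E om) w om.

Definition is_prob (R : realType) (Omega : finType) (w : Omega -> R) : Prop :=
  (forall om, 0 <= w om) /\ \sum_om w om = 1.

Definition muC (R : realType) (Omega : finType) (w : Omega -> R) (s : nat)
  (Y : Omega -> int) (lam : 'I_s -> Omega -> int) : 'cV[R]_(2 * 3 ^ s) :=
  \col_k prob w (fun om => (Y om == yval (tdig k)) &&
                   [forall i : 'I_s, lam i om == bval (ddig k i)]).

Definition rC (R : realType) (Omega : finType) (w : Omega -> R) (s : nat)
  (Y : Omega -> int) (lam : 'I_s -> Omega -> int) : 'cV[R]_(2 * 3 ^ s) :=
  \col_k prob w (fun om =>
     ((if tdig k == 1%N then Y om else 1) *
        \prod_(i : 'I_s | ddig k i == 1%N) lam i om == 1)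
     && [forall i : 'I_s, (ddig k i == 2%N) ==> (lam i om == 0)]).

(* Main.v *)
Require Import Defs.
From mathcomp Require Import all_boot all_order all_algebra.
From mathcomp Require Import mxtens reals zify.
Import GRing.Theory Num.Theory.
Local Open Scope ring_scope.

Lemma tdig_split s q r : tdig (q * (2 * 3 ^ s) + r) = tdig r.
Proof. by rewrite /tdig mulnCA mulnC modnMDl. Qed.

Lemma ddig_split_lo s q r i : (i < s)%N ->
  ddig (q * (2 * 3 ^ s) + r) i = ddig r i.
Proof.
move=> lt_is; rewrite /ddig.
have -> : (q * (2 * 3 ^ s) = (q * 3 ^ (s - i).-1 * 3) * (2 * 3 ^ i))%N.
  have -> : (3 ^ s = 3 ^ (s - i).-1 * 3 * 3 ^ i)%N.
    by rewrite -expnSr prednK ?subn_gt0 // -expnD subnK // ltnW.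
  by rewrite !mulnA; lia.
by rewrite divnMDl ?muln_gt0 ?expn_gt0 // modnMDl.
Qed.

Lemma ddig_split_hi s q r : (q < 3)%N -> (r < 2 * 3 ^ s)%N ->
  ddig (q * (2 * 3 ^ s) + r) s = q.
Proof.
move=> hq hr; rewrite /ddig divnMDl ?muln_gt0 ?expn_gt0 // divn_small //.
by rewrite addn0 modn_small.
Qed.

Definition Pv s (k j : nat) : int :=
  (if tdig k == 1%N then yval (tdig j) else 1) *
  \prod_(i < s | ddig k i == 1%N) bval (ddig j i).
Definition Uv s (k j : nat) : bool :=
  [forall i : 'I_s, (ddig k i == 2%N) ==> (ddig j i == 1%N)].

Lemma forall_ordS s (P : pred nat) :
  [forall i : 'I_s.+1, P i] = [forall i : 'I_s, P i] && P s.
Proof.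
apply/forallP/andP => [H|[/forallP H1 H2] i].
  by split; [apply/forallP => i; exact: (H (widen_ord (leqnSn s) i)) | exact: (H ord_max)].
have := ltn_ord i; rewrite ltnS leq_eqVlt => /orP[/eqP -> //|lt].
exact: (H1 (Ordinal lt)).
Qed.

Lemma ddig_lt3 k i : (ddig k i < 3)%N.
Proof. by rewrite /ddig ltn_mod. Qed.

Lemma Pv_split0 s q r q' r' : (q < 3)%N -> (q' < 3)%N ->
  (r < 2 * 3 ^ s)%N -> (r' < 2 * 3 ^ s)%N ->
  Pv s.+1 (q * (2 * 3 ^ s) + r) (q' * (2 * 3 ^ s) + r') =
  Pv s r r' * (if q == 1%N then bval q' else 1).
Proof.
move=> hq hq' hr hr'.
rewrite /Pv big_mkcond big_ord_recr /= -big_mkcond mulrA.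
rewrite !tdig_split !ddig_split_hi //; congr (_ * _ * _).
by apply: eq_big => i; rewrite !ddig_split_lo.
Qed.

Lemma Uv_split0 s q r q' r' : (q < 3)%N -> (q' < 3)%N ->
  (r < 2 * 3 ^ s)%N -> (r' < 2 * 3 ^ s)%N ->
  Uv s.+1 (q * (2 * 3 ^ s) + r) (q' * (2 * 3 ^ s) + r') =
  Uv s r r' && ((q == 2%N) ==> (q' == 1%N)).
Proof.
move=> hq hq' hr hr'.
rewrite /Uv (forall_ordS s (fun i => (ddig _ i == 2%N) ==> (ddig _ i == 1%N))).
rewrite !ddig_split_hi //.
congr (_ && _); apply: eq_forallb => i.
by rewrite !ddig_split_lo.
Qed.

Lemma split_bounds s k : (k < 2 * 3 ^ s.+1)%N ->
  [/\ (k %/ (2 * 3 ^ s) < 3)%N, (k %% (2 * 3 ^ s) < 2 * 3 ^ s)%N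
    & k = (k %/ (2 * 3 ^ s) * (2 * 3 ^ s) + k %% (2 * 3 ^ s))%N].
Proof.
move=> hk.
have M0 : (0 < 2 * 3 ^ s)%N by rewrite muln_gt0 expn_gt0.
split; last exact: divn_eq.
  by rewrite ltn_divLR //; move: (dimS s); lia.
exact: ltn_pmod.
Qed.

Lemma Pv_split s k j : (k < 2 * 3 ^ s.+1)%N -> (j < 2 * 3 ^ s.+1)%N ->
  Pv s.+1 k j = Pv s (k %% (2 * 3 ^ s))%N (j %% (2 * 3 ^ s))%N *
     (if (k %/ (2 * 3 ^ s))%N == 1%N then bval (j %/ (2 * 3 ^ s))%N else 1).
Proof.
move=> /split_bounds[hk1 hk2 Ek] /split_bounds[hj1 hj2 Ej].
by rewrite {1}Ek {1}Ej Pv_split0.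
Qed.

Lemma Uv_split s k j : (k < 2 * 3 ^ s.+1)%N -> (j < 2 * 3 ^ s.+1)%N ->
  Uv s.+1 k j = Uv s (k %% (2 * 3 ^ s))%N (j %% (2 * 3 ^ s))%N &&
     (((k %/ (2 * 3 ^ s))%N == 2%N) ==> ((j %/ (2 * 3 ^ s))%N == 1%N)).
Proof.
move=> /split_bounds[hk1 hk2 Ek] /split_bounds[hj1 hj2 Ej].
by rewrite {1}Ek {1}Ej Uv_split0.
Qed.

Lemma ABmxS (R : pzRingType) s :
  Amx R s.+1 = castmx (dimS s, dimS s) (Dm R *t Amx R s + Em R *t Bmx R s) /\
  Bmx R s.+1 = castmx (dimS s, dimS s) (Em R *t Amx R s + Dm R *t Bmx R s).
Proof. by rewrite /Amx /Bmx /=; case: (ABmx R s). Qed.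

Lemma entries (R : pzRingType) s (k j : 'I_(2 * 3 ^ s)) :
  Amx R s k j = ((Pv s k j == 1) && Uv s k j)%:R /\
  Bmx R s k j = ((Pv s k j == -1) && Uv s k j)%:R.
Proof.
elim: s k j => [|s IH] k j.
  have -> : Uv 0 k j = true by apply/forallP => -[].
  rewrite /Amx /Bmx /= /A0 /B0 /mx_of_rows !mxE /Pv big_ord0 mulr1.
  by case: k j => [[|[|k]] hk] // [[|[|j]] hj].
have [EA EB] := ABmxS R s.
have hk := ltn_ord k; have hj := ltn_ord j.
rewrite EA EB !castmxE !mxE /= Pv_split // Uv_split //.
rewrite !(proj1 (IH _ _)) !(proj2 (IH _ _)) /=.
have [hq _ _] := split_bounds _ _ hk; have [hq' _ _] := split_bounds _ _ hj.
move: (Pv s _ _) (Uv s _ _) => P U.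
move: (k %/ _)%N (j %/ _)%N hq hq' => q q'.
case: q => [|[|[|q]]] // _; case: q' => [|[|[|q']]] // _ /=;
  case: U; rewrite ?mul1r ?mul0r ?add0r ?addr0 ?mulr1 ?mulr0 ?mulrN1 ?eqr_oppLR ?andbT ?andbF //.
Qed.

Lemma idx_exists s t (d : nat -> nat) : (t < 2)%N -> (forall i, i < s -> d i < 3)%N ->
  exists j : 'I_(2 * 3 ^ s), tdig j = t /\ forall i, (i < s)%N -> ddig j i = d i.
Proof.
move=> ht; elim: s => [|s IH] hd.
  by exists (Ordinal ht); split => //=; rewrite /tdig modn_small.
have [j' [hj't hj'd]] : exists j : 'I_(2 * 3 ^ s), tdig j = t /\
    forall i, (i < s)%N -> ddig j i = d i.
  by apply: IH => i hi; apply: hd; rewrite ltnS ltnW.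
have hds : (d s < 3)%N by apply: hd.
have hj' := ltn_ord j'.
have lt : (d s * (2 * 3 ^ s) + j' < 2 * 3 ^ s.+1)%N.
  rewrite -dimS; move: hds hj'; set M := (2 * 3 ^ s)%N; nia.
exists (Ordinal lt); split => /=; first by rewrite tdig_split.
move=> i; rewrite ltnS leq_eqVlt => /orP[/eqP ->|hi].
  by rewrite ddig_split_hi.
by rewrite ddig_split_lo // hj'd.
Qed.

Lemma idx_uniq s (j1 j2 : nat) : (j1 < 2 * 3 ^ s)%N -> (j2 < 2 * 3 ^ s)%N ->
  tdig j1 = tdig j2 -> (forall i, (i < s)%N -> ddig j1 i = ddig j2 i) -> j1 = j2.
Proof.
elim: s j1 j2 => [|s IH] j1 j2 h1 h2 ht hd.
  by move: ht; rewrite /tdig !modn_small.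
have [q1 r1 E1] := split_bounds _ _ h1; have [q2 r2 E2] := split_bounds _ _ h2.
rewrite E1 E2 in ht hd *.
have eq := hd s (ltnSn s); rewrite !ddig_split_hi // in eq.
rewrite eq; congr (_ + _)%N; apply: IH => //.
  by rewrite !tdig_split in ht.
by move=> i hi; have := hd i (ltnW hi); rewrite !ddig_split_lo.
Qed.

Definition code (v : int) : nat := if v == 1 then 0%N else if v == 0 then 1%N else 2%N.

Lemma bval_code v : v = 1 \/ v = 0 \/ v = -1 -> bval (code v) = v.
Proof. by case=> [->|[->|->]]. Qed.

Lemma bval_inj d1 d2 : (d1 < 3)%N -> (d2 < 3)%N -> bval d1 = bval d2 -> d1 = d2.
Proof. by case: d1 => [|[|[|]]] // _; case: d2 => [|[|[|]]]. Qed.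

Lemma yval_inj d1 d2 : (d1 < 2)%N -> (d2 < 2)%N -> yval d1 = yval d2 -> d1 = d2.
Proof. by case: d1 => [|[|]] // _; case: d2 => [|[|]]. Qed.

Lemma bval_eq0 d : (bval d == 0) = (d == 1%N).
Proof. by case: d => [|[|]]. Qed.

Lemma tdig_lt2 k : (tdig k < 2)%N.
Proof. by rewrite /tdig ltn_mod. Qed.

Theorem lemma2 (R : realType) (Omega : finType) (w : Omega -> R) (s : nat)
  (Y : Omega -> int) (lam : 'I_s -> Omega -> int) :
  is_prob w ->
  (forall om, Y om = 1 \/ Y om = -1) ->
  (forall i om, lam i om = 1 \/ lam i om = 0 \/ lam i om = -1) ->
  Amx R s *m muC w Y lam = rC w Y lam.
Proof.
move=> _ hY hL; apply/matrixP => k c; rewrite (ord1 c) !mxE /prob.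
under eq_bigr => j _ do rewrite mxE big_distrr big_mkcond /=.
rewrite exchange_big /= [RHS]big_mkcond /=; apply: eq_bigr => om _.
pose t := if Y om == 1 then 0%N else 1%N.
pose d n := oapp (fun i : 'I_s => code (lam i om)) 0%N (insub n).
have ht : (t < 2)%N by rewrite /t; case: ifP.
have hd : forall i, (i < s)%N -> (d i < 3)%N.
  move=> i _; rewrite /d; case: (insub i) => [a|] //=.
  by rewrite /code; case: ifP => //; case: ifP.
have [j0 [hj0t hj0d]] := idx_exists s t d ht hd.
have hY0 : yval (tdig j0) = Y om by rewrite hj0t /t; case: (hY om) => ->.
have hL0 : forall i : 'I_s, bval (ddig j0 i) = lam i om.
  by move=> i; rewrite hj0d // /d valK /= bval_code.
have m0 : (Y om == yval (tdig j0)) && [forall i, lam i om == bval (ddig j0 i)].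
  by rewrite hY0 eqxx /=; apply/forallP => i; rewrite hL0.
rewrite (bigD1 j0) //= m0 big1 ?addr0 => [|j hj]; last first.
  case: ifP => // /andP[/eqP hYj /forallP hLj]; case/eqP: hj; apply: val_inj.
  apply: (@idx_uniq s j j0 (ltn_ord j) (ltn_ord j0)).
    by apply: yval_inj; rewrite ?tdig_lt2 // hY0 -hYj.
  move=> i hi; apply: bval_inj; rewrite ?ddig_lt3 //.
  by have := hLj (Ordinal hi); have := hL0 (Ordinal hi); simpl => <- /eqP ->.
rewrite (proj1 (entries _ s k j0)).
have -> : Pv s k j0 = (if tdig k == 1%N then Y om else 1) *
    \prod_(i < s | ddig k i == 1%N) lam i om.
  by rewrite /Pv hY0; congr (_ * _); apply: eq_bigr => i _; rewrite hL0.
have -> : Uv s k j0 = [forall i : 'I_s, (ddig k i == 2%N) ==> (lam i om == 0)].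
  by apply: eq_forallb => i; rewrite -hL0 bval_eq0.
by case: (_ && _); rewrite ?mul1r ?mul0r.
Qed.
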